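(* (i) The collection $\mathrm{Prim}\,Mag=(\mathrm{Prim}\,Mag(n))_{n\ge1}$ is a suboperad of the operad $Mag$: it contains the identity operation and is closed under operadic composition, so that the composition $Mag\circ Mag\to Mag$ restricts to $\mathrm{Prim}\,Mag\circ\mathrm{Prim}\,Mag\to\mathrm{Prim}\,Mag$. (ii) For every $As^c$-$Mag$-bialgebra $\mathcal H$, every $p\in\mathrm{Prim}\,Mag(n)$ and all $x_1,\dots,x_n\in\mathrm{Prim}\,\mathcal H$, the element $p(x_1,\dots,x_n)$ computed with the product of $\mathcal H$ lies in $\mathrm{Prim}\,\mathcal H$; thus $\mathrm{Prim}\,\mathcal H$ is an algebra over $\mathrm{Prim}\,Mag$.
   Context: Let $\mathbb K$ be a field. An $As^c$-$Mag$-bialgebra is a vector space $\mathcal H$ with a bilinear product $\cdot$ (not assumed associative) with two-sided unit $1$ and a coassociative counital coproduct $\Delta$ with $\Delta(1)=1\otimes1$ and $\Delta(x\cdot y)=\Delta(x)\cdot(1\otimes y)+(x\otimes1)\cdot\Delta(y)-x\otimes y$, the product on $\mathcal H\otimes\mathcal H$ being componentwise; $\mathrm{Prim}\,\mathcal H$ is the set of $x$ in the kernel of the counit with $\Delta(x)=x\otimes1+1\otimes x$. $Mag$ is the operad of unital magmatic algebras: $Mag(n)=\mathbb K[Y_{n-1}]\otimes\mathbb K[S_n]$, $Y_{n-1}$ the set of planar binary rooted trees with $n$ leaves, an element $(t,\sigma)$ acting on a magmatic algebra by evaluating the bracketing $t$ on $(x_{\sigma^{-1}(1)},\dots,x_{\sigma^{-1}(n)})$.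 The free magmatic algebra $Mag(V)$ on a vector space $V$ carries the unique coproduct $\Delta$ with $\Delta(1)=1\otimes1$, $\Delta(v)=v\otimes1+1\otimes v$ ($v\in V$) satisfying the relation above, making it an $As^c$-$Mag$-bialgebra. $\mathrm{Prim}\,Mag(n)\subset Mag(n)$ is the subspace of operations $p$ such that $p(x_1,\dots,x_n)$ is primitive in $Mag(\mathbb Kx_1\oplus\dots\oplus\mathbb Kx_n)$. *)

(* Defs.v *)
From HB Require Import structures.
From mathcomp Require Import all_boot all_order fingroup perm all_algebra.
Set Implicit Arguments. Unset Strict Implicit. Unset Printing Implicit Defensive.
Import GRing.Theory.
Local Open Scope ring_scope.

(* Planar binary rooted trees (unlabelled); Y_{n-1} = trees with n leaves *)
Inductive tree := Lf | Nd of tree & tree.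

Fixpoint leaves (t : tree) : nat :=
  match t with Lf => 1%N | Nd l r => (leaves l + leaves r)%N end.

Fixpoint eval_tree {A : Type} (x0 : A) (mul : A -> A -> A) (t : tree) (xs : seq A) : A :=
  match t with
  | Lf => head x0 xs
  | Nd l r => mul (eval_tree x0 mul l (take (leaves l) xs))
                  (eval_tree x0 mul r (drop (leaves l) xs))
  end.

(* Mag(n) = K[Y_{n-1}] (x) K[S_n]: an element is a formal linear combination
   of basis pairs (t, sigma), represented as a list of (coefficient, t, sigma);
   it lies in Mag(n) when every tree has n leaves. *)
Definition Mag (K : fieldType) (n : nat) := seq (K * tree * 'S_n).

Definition in_Mag (K : fieldType) (n : nat) (p : Mag K n) : bool :=
  all (fun x => leaves x.1.2 == n) p.

(* Action of p in Mag(n) on x_1..x_n in a (unital) magmatic algebra A, given by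
   its addition, zero, scalar action and product:
   (t, sigma) acts by evaluating t on (x_{sigma^-1(1)}, ..., x_{sigma^-1(n)}). *)
Definition mag_act (K : fieldType) {A : Type} (add : A -> A -> A) (zero : A)
  (scale : K -> A -> A) (mul : A -> A -> A) (n : nat) (p : Mag K n)
  (x : 'I_n -> A) : A :=
  foldr (fun cts acc =>
           add (scale cts.1.1
                  (eval_tree zero mul cts.1.2 [seq x (((cts.2 : 'S_n)^-1)%g i) | i <- enum 'I_n]))
               acc) zero p.

(* The free unital magmatic algebra Mag(K x_0 + ... + K x_{n-1}).
   Basis: the unit (None) and nonempty planar binary trees with leaves
   labelled by generator indices (Some T). *)
Inductive mterm := MLeaf of nat | MNode of mterm & mterm.

Fixpoint mterm_eqb (a b : mterm) : bool :=
  match a, b with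
  | MLeaf i, MLeaf j => i == j
  | MNode a1 a2, MNode b1 b2 => mterm_eqb a1 b1 && mterm_eqb a2 b2
  | _, _ => false
  end.

Lemma mterm_eqP : Equality.axiom mterm_eqb.
Proof.
elim=> [i|a1 IH1 a2 IH2] [j|b1 b2] /=; try by constructor.
- by apply: (iffP eqP) => [->|[]].
- apply: (iffP andP) => [[/IH1 -> /IH2 ->]|[<- <-]] //.
  by split; [apply/IH1|apply/IH2].
Qed.

HB.instance Definition _ := hasDecEq.Build mterm mterm_eqP.

Definition bmul (a b : option mterm) : option mterm :=
  match a, b with
  | None, _ => b
  | _, None => a
  | Some u, Some v => Some (MNode u v)
  end.

Section FreeMag.
Variable K : fieldType.

(* elements of the free algebra: formal sums, compared by coefficients *)
Definition fsum := seq (K * option mterm).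
(* elements of Mag(V) (x) Mag(V) = K[basis x basis] *)
Definition fsum2 := seq (K * option mterm * option mterm).

Definition coef (s : fsum) (b : option mterm) : K :=
  \sum_(x <- s | x.2 == b) x.1.
Definition coef2 (s : fsum2) (b1 b2 : option mterm) : K :=
  \sum_(x <- s | (x.1.2 == b1) && (x.2 == b2)) x.1.1.

Definition fscale (c : K) (s : fsum) : fsum := [seq (c * x.1, x.2) | x <- s].
Definition fmul (s t : fsum) : fsum :=
  [seq (x.1 * y.1, bmul x.2 y.2) | x <- s, y <- t].
Definition fgen (i : nat) : fsum := [:: (1, Some (MLeaf i))].

(* coproduct on basis trees:
   Delta(x_i) = x_i (x) 1 + 1 (x) x_i,
   Delta(a.b) = Delta(a).(1 (x) b) + (a (x) 1).Delta(b) - a (x) b *)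
Fixpoint delta_t (u : mterm) : fsum2 :=
  match u with
  | MLeaf i => [:: (1, Some (MLeaf i), None); (1, None, Some (MLeaf i))]
  | MNode l r =>
      [seq (x.1.1, x.1.2, bmul x.2 (Some r)) | x <- delta_t l]
      ++ [seq (x.1.1, bmul (Some l) x.1.2, x.2) | x <- delta_t r]
      ++ [:: (-1, Some l, Some r)]
  end.

Definition delta_b (b : option mterm) : fsum2 :=
  match b with None => [:: (1, None, None)] | Some u => delta_t u end.

Definition fdelta (s : fsum) : fsum2 :=
  flatten [seq [seq (x.1 * y.1.1, y.1.2, y.2) | y <- delta_b x.2] | x <- s].

Definition fcounit (s : fsum) : K := coef s None.

Definition free_prim (s : fsum) : Prop :=
  fcounit s = 0 /\
  forall b1 b2, coef2 (fdelta s) b1 b2 =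
    coef2 ([seq (x.1, x.2, None) | x <- s] ++ [seq (x.1, None, x.2) | x <- s]) b1 b2.

Definition eval_free (n : nat) (p : Mag K n) : fsum :=
  mag_act cat [::] fscale fmul p (fun i => fgen i).

Definition PrimMag (n : nat) (p : Mag K n) : Prop :=
  in_Mag p /\ free_prim (eval_free p).

Definition mag_id : Mag K 1 := [:: (1, Lf, 1%g)].

Definition to_term (n : nat) (t : tree) (s : 'S_n) : mterm :=
  eval_tree (MLeaf 0) MNode t [seq MLeaf (val ((s^-1)%g i)) | i <- enum 'I_n].

Fixpoint shape (u : mterm) : tree :=
  match u with MLeaf _ => Lf | MNode a b => Nd (shape a) (shape b) end.
Fixpoint labels (u : mterm) : seq nat :=
  match u with MLeaf i => [:: i] | MNode a b => labels a ++ labels b end.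
Fixpoint shift_term (k : nat) (u : mterm) : mterm :=
  match u with MLeaf i => MLeaf (k + i) | MNode a b => MNode (shift_term k a) (shift_term k b) end.

(* the permutation sigma of M letters such that position j carries label
   sigma^-1(j) (labels are assumed to form a permutation of 0..M-1) *)
Definition perm_of_labels (M : nat) (ls : seq nat) : 'S_M :=
  ((insubd (1%g : 'S_M) [ffun j : 'I_M => insubd j (nth 0%N ls j)])^-1)%g.

Fixpoint subst_term (f : nat -> seq (K * mterm)) (u : mterm) : seq (K * mterm) :=
  match u with
  | MLeaf k => f k
  | MNode a b => [seq (x.1 * y.1, MNode x.2 y.2) | x <- subst_term f a, y <- subst_term f b]
  end.

Definition offset (n : nat) (m : 'I_n -> nat) (i : 'I_n) : nat :=
  (\sum_(j < n | (j < i)%N) m j)%N.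

(* operadic composition gamma : Mag(n) (x) Mag(m_1) (x) ... (x) Mag(m_n) -> Mag(m_1+...+m_n),
   gamma(p; q_1,...,q_n)(y) = p(q_1(y_1..y_{m_1}), q_2(y_{m_1+1}..), ...) *)
Definition mag_comp (n : nat) (m : 'I_n -> nat) (p : Mag K n)
  (q : forall i : 'I_n, Mag K (m i)) : Mag K (\sum_(i < n) m i)%N :=
  let f (k : nat) : seq (K * mterm) :=
    match @insub _ (fun k => (k < n)%N) 'I_n k with
    | Some i => [seq (x.1.1, shift_term (offset m i) (to_term x.1.2 x.2)) | x <- q i]
    | None => [::]
    end in
  flatten [seq [seq (x.1.1 * y.1, shape y.2, perm_of_labels (\sum_(i < n) m i)%N (labels y.2))
               | y <- subst_term f (to_term x.1.2 x.2)] | x <- p].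

End FreeMag.

(* Elements of H (x) H (resp. H (x) H (x) H) are
   represented by finite formal sums of pure tensors; two such sums are equal
   in the tensor product iff they have the same image under every bilinear
   (resp. trilinear) map into every K-vector space (universal property). *)
Section Bialg.
Variables (K : fieldType) (H : lmodType K).

Definition bilinear_map (W : lmodType K) (b : H -> H -> W) : Prop :=
  (forall (k : K) x y z, b (k *: x + y) z = k *: b x z + b y z) /\
  (forall (k : K) x y z, b z (k *: x + y) = k *: b z x + b z y).

Definition trilinear_map (W : lmodType K) (b : H -> H -> H -> W) : Prop :=
  (forall (k : K) x y u v, b (k *: x + y) u v = k *: b x u v + b y u v) /\
  (forall (k : K) x y u v, b u (k *: x + y) v = k *: b u x v + b u y v) /\
  (forall (k : K) x y u v, b u v (k *: x + y) = k *: b u v x + b u v y).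

Definition teq2 (s t : seq (H * H)) : Prop :=
  forall (W : lmodType K) (b : H -> H -> W), bilinear_map b ->
    \sum_(x <- s) b x.1 x.2 = \sum_(x <- t) b x.1 x.2.

Definition teq3 (s t : seq (H * H * H)) : Prop :=
  forall (W : lmodType K) (b : H -> H -> H -> W), trilinear_map b ->
    \sum_(x <- s) b x.1.1 x.1.2 x.2 = \sum_(x <- t) b x.1.1 x.1.2 x.2.

Definition tscale (k : K) (s : seq (H * H)) : seq (H * H) :=
  [seq (k *: x.1, x.2) | x <- s].

Definition AsMag_bialgebra (mul : H -> H -> H) (one : H)
  (Delta : H -> seq (H * H)) (eps : H -> K) : Prop :=
  (
      (forall (k : K) x y z, mul (k *: x + y) z = k *: mul x z + mul y z) /\
      (forall (k : K) x y z, mul z (k *: x + y) = k *: mul z x + mul z y) /\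
      (forall x, mul one x = x) /\ (forall x, mul x one = x) /\
      (forall (k : K) x y, teq2 (Delta (k *: x + y)) (tscale k (Delta x) ++ Delta y)) /\
      (forall (k : K) x y, eps (k *: x + y) = k * eps x + eps y) /\
      (forall x, teq3 (flatten [seq [seq (y.1, y.2, z.2) | y <- Delta z.1] | z <- Delta x])
                      (flatten [seq [seq (z.1, y.1, y.2) | y <- Delta z.2] | z <- Delta x])) /\
      (forall x, \sum_(z <- Delta x) eps z.1 *: z.2 = x /\
                 \sum_(z <- Delta x) eps z.2 *: z.1 = x) /\
      teq2 (Delta one) [:: (one, one)] /\
      (forall x y, teq2 (Delta (mul x y))
                        ([seq (z.1, mul z.2 y) | z <- Delta x]
                         ++ [seq (mul x z.1, z.2) | z <- Delta y]
                         ++ [:: (- x, y)]))).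

Definition PrimH (one : H) (Delta : H -> seq (H * H)) (eps : H -> K) (x : H) : Prop :=
  eps x = 0 /\ teq2 (Delta x) [:: (x, one); (one, x)].

End Bialg.

(* Main.v *)
Require Import Defs.
From HB Require Import structures.
From mathcomp Require Import all_boot all_order fingroup perm all_algebra.
From mathcomp Require Import finmap.
From mathcomp Require Import monalg.
Set Implicit Arguments. Unset Strict Implicit. Unset Printing Implicit Defensive.
Import GRing.Theory.
Local Open Scope ring_scope.

Fixpoint enc (u : mterm) : GenTree.tree nat :=
  match u with MLeaf i => GenTree.Leaf i | MNode a b => GenTree.Node 0 [:: enc a; enc b] end.
Fixpoint dec (t : GenTree.tree nat) : option mterm :=
  match t with
  | GenTree.Leaf i => Some (MLeaf i)
  | GenTree.Node _ [:: a; b] => if (dec a, dec b) is (Some x, Some y) then Some (MNode x y) else None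
  | _ => None end.
Lemma encK : pcancel enc dec. Proof. by elim=> //= a -> b ->. Qed.
HB.instance Definition _ := Choice.copy mterm (pcan_type encK).

Section Lin.
Variables (K : fieldType) (T : choiceType) (W : lmodType K).
Implicit Types (g : {malg K[T]}) (gam : T -> W).

Definition Lx gam g : W := \sum_(k <- msupp g) g@_k *: gam k.

Lemma LxEw gam (D : {fset T}) g : (msupp g `<=` D)%fset ->
  Lx gam g = \sum_(k <- D) g@_k *: gam k.
Proof.
move=> le; rewrite /Lx (big_fset_incl _ le) //= => x xd /mcoeff_outdom ->.
by rewrite scale0r.
Qed.

Lemma Lx_lin gam c g g' : Lx gam (c *: g + g') = c *: Lx gam g + Lx gam g'.
Proof.
set D := (msupp g `|` msupp g' `|` msupp (c *: g + g'))%fset.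
have h1 : (msupp g `<=` D)%fset.
  by rewrite /D -fsetUA fsubsetUl.
have h2 : (msupp g' `<=` D)%fset.
  by rewrite /D (fsetUC (msupp g)) -fsetUA fsubsetUl.
have h3 : (msupp (c *: g + g') `<=` D)%fset by apply: fsubsetUr.
rewrite (LxEw gam h3) (LxEw gam h1) (LxEw gam h2).
rewrite scaler_sumr -big_split /=; apply: eq_bigr => k _.
by rewrite mcoeffD mcoeffZ scalerDl scalerA.
Qed.

Lemma Lx0 gam : Lx gam 0 = 0.
Proof. by rewrite /Lx msupp0 big_nil. Qed.

Lemma LxD gam g g' : Lx gam (g + g') = Lx gam g + Lx gam g'.
Proof. by have := Lx_lin gam 1 g g'; rewrite !scale1r. Qed.

Lemma LxZ gam c g : Lx gam (c *: g) = c *: Lx gam g.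
Proof. by have := Lx_lin gam c g 0; rewrite !addr0 Lx0 addr0. Qed.

Lemma Lx_sum gam (I : Type) (s : seq I) (F : I -> {malg K[T]}) :
  Lx gam (\sum_(i <- s) F i) = \sum_(i <- s) Lx gam (F i).
Proof.
elim: s => [|a s IH]; first by rewrite !big_nil Lx0.
by rewrite !big_cons LxD IH.
Qed.

Lemma LxU gam c k : Lx gam << c *g k >> = c *: gam k.
Proof. by rewrite (@LxEw gam _ _ msuppU_le) big_seq_fset1 mcoeffUU. Qed.

Lemma Lx_fun gam1 gam2 c g :
  Lx (fun k => c *: gam1 k + gam2 k) g = c *: Lx gam1 g + Lx gam2 g.
Proof.
rewrite /Lx scaler_sumr -big_split /=; apply: eq_bigr => k _.
by rewrite scalerDr !scalerA mulrC.
Qed.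

Lemma Lx_ext gam1 gam2 g : gam1 =1 gam2 -> Lx gam1 g = Lx gam2 g.
Proof. by move=> e; apply: eq_bigr => k _; rewrite e. Qed.

End Lin.
Section LinF.
Variables (K : fieldType) (U V : lmodType K).
Definition linf (f : U -> V) := forall (k : K) x y, f (k *: x + y) = k *: f x + f y.
Variable f : U -> V.
Hypothesis hf : linf f.
Lemma linf0 : f 0 = 0.
Proof.
have := hf 1 0 0; rewrite !scale1r addr0.
by move/(congr1 (fun v => v - f 0)); rewrite subrr addrK => <-.
Qed.
Lemma linfZ k x : f (k *: x) = k *: f x.
Proof. by have := hf k x 0; rewrite addr0 linf0 addr0. Qed.
Lemma linfD x y : f (x + y) = f x + f y.
Proof. by have := hf 1 x y; rewrite !scale1r. Qed.
Lemma linfN x : f (- x) = - f x.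
Proof. by rewrite -scaleN1r linfZ scaleN1r. Qed.
Lemma linf_sum (I : Type) (s : seq I) (F : I -> U) :
  f (\sum_(i <- s) F i) = \sum_(i <- s) f (F i).
Proof.
elim: s => [|a s IH]; first by rewrite !big_nil linf0.
by rewrite !big_cons linfD IH.
Qed.
End LinF.

Section Group2.
Variables (K : fieldType) (W : lmodType K).

Definition I2 (D : fsum2 K) : {malg K[(option mterm * option mterm)%type]} :=
  \sum_(e <- D) << e.1.1 *g (e.1.2, e.2) >>.

Lemma I2_coef D b1 b2 : (I2 D)@_(b1, b2) = coef2 D b1 b2.
Proof.
rewrite /I2 /coef2; elim: D => [|e D IH]; first by rewrite !big_nil mcoeff0.
rewrite !big_cons mcoeffD IH mcoeffU xpair_eqE.
by case: ifP => _; rewrite ?mulr1n ?mulr0n ?add0r.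
Qed.

Lemma group2 (D D' : fsum2 K) (gam : option mterm -> option mterm -> W) :
  (forall b1 b2, coef2 D b1 b2 = coef2 D' b1 b2) ->
  \sum_(e <- D) e.1.1 *: gam e.1.2 e.2 = \sum_(e <- D') e.1.1 *: gam e.1.2 e.2.
Proof.
move=> hc.
have eI : I2 D = I2 D' by apply/malgP => -[b1 b2]; rewrite !I2_coef.
have eL (E : fsum2 K) : \sum_(e <- E) e.1.1 *: gam e.1.2 e.2 =
    Lx (fun k => gam k.1 k.2) (I2 E).
  by rewrite /I2 Lx_sum; apply: eq_bigr => e _; rewrite LxU.
by rewrite !eL eI.
Qed.
End Group2.
Section GenB.
Variables (K : fieldType) (H : lmodType K) (mul : H -> H -> H) (one : H)
  (Delta : H -> seq (H * H)).
Hypothesis mulL : forall (k : K) x y z, mul (k *: x + y) z = k *: mul x z + mul y z.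
Hypothesis mulR : forall (k : K) x y z, mul z (k *: x + y) = k *: mul z x + mul z y.
Hypothesis mul1x : forall x, mul one x = x.
Hypothesis mulx1 : forall x, mul x one = x.
Hypothesis DeltaL : forall (k : K) x y,
  teq2 (Delta (k *: x + y)) (tscale k (Delta x) ++ Delta y).
Hypothesis Delta1 : teq2 (Delta one) [:: (one, one)].
Hypothesis DeltaM : forall x y, teq2 (Delta (mul x y))
  ([seq (z.1, mul z.2 y) | z <- Delta x] ++ [seq (mul x z.1, z.2) | z <- Delta y]
   ++ [:: (- x, y)]).
Variable g : nat -> H.
Hypothesis gprim : forall k, teq2 (Delta (g k)) [:: (g k, one); (one, g k)].

Fixpoint phit (u : mterm) : H :=
  match u with MLeaf k => g k | MNode a b => mul (phit a) (phit b) end.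
Definition phib (b : option mterm) : H := if b is Some u then phit u else one.
Definition phi (s : fsum K) : H := \sum_(x <- s) x.1 *: phib x.2.

Lemma linmulL z : linf (mul^~ z). Proof. by move=> k x y; apply: mulL. Qed.
Lemma linmulR z : linf (mul z). Proof. by move=> k x y; apply: mulR. Qed.

Lemma phib_mul a b : phib (bmul a b) = mul (phib a) (phib b).
Proof. by case: a => [a|]; case: b => [b|] //=; rewrite ?mul1x ?mulx1. Qed.

Lemma phi_nil : phi [::] = 0. Proof. by rewrite /phi big_nil. Qed.
Lemma phi_cat s t : phi (s ++ t) = phi s + phi t. Proof. by rewrite /phi big_cat. Qed.
Lemma phi_scale c s : phi (fscale c s) = c *: phi s.
Proof.
rewrite /phi /fscale big_map scaler_sumr; apply: eq_bigr => x _.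
by rewrite scalerA.
Qed.
Lemma phi_fmul s t : phi (fmul s t) = mul (phi s) (phi t).
Proof.
rewrite /phi /fmul big_allpairs_dep (linf_sum (linmulL _)).
apply: eq_bigr => x _; rewrite (linfZ (linmulL _)) (linf_sum (linmulR _)).
rewrite scaler_sumr; apply: eq_bigr => y _.
by rewrite (linfZ (linmulR _)) phib_mul scalerA mulrC.
Qed.

Lemma phi_eval_tree t xs :
  phi (eval_tree [::] (@fmul K) t xs) = eval_tree 0 mul t (map phi xs).
Proof.
elim: t xs => [|l IHl r IHr] xs /=.
  by case: xs => [|x xs] //=; rewrite phi_nil.
by rewrite phi_fmul IHl IHr map_take map_drop.
Qed.

Definition S2 (W : lmodType K) (b : H -> H -> W) (D : seq (H * H)) : W :=
  \sum_(x <- D) b x.1 x.2.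

Lemma S2_cat (W : lmodType K) (b : H -> H -> W) D1 D2 :
  S2 b (D1 ++ D2) = S2 b D1 + S2 b D2.
Proof. by rewrite /S2 big_cat. Qed.

Lemma S2_tscale (W : lmodType K) (b : H -> H -> W) k D :
  bilinear_map b -> S2 b (tscale k D) = k *: S2 b D.
Proof.
move=> [bl br]; rewrite /S2 /tscale big_map scaler_sumr; apply: eq_bigr => x _.
by rewrite (linfZ (f := b^~ x.2)) // => c u v; apply: bl.
Qed.

Lemma Delta0 (W : lmodType K) (b : H -> H -> W) :
  bilinear_map b -> S2 b (Delta 0) = 0.
Proof.
move=> hb; have := DeltaL (-1) 0 0 hb; rewrite scaler0 addr0.
rewrite -/(S2 b _) -/(S2 b _) S2_cat S2_tscale // scaleN1r.
by rewrite addNr.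
Qed.

Lemma bil_l (W : lmodType K) (b : H -> H -> W) : bilinear_map b -> forall z, linf (b^~ z).
Proof. by case=> bl _ z k x y; apply: bl. Qed.
Lemma bil_r (W : lmodType K) (b : H -> H -> W) : bilinear_map b -> forall z, linf (b z).
Proof. by case=> _ br z k x y; apply: br. Qed.

Lemma Delta_phit u : forall (W : lmodType K) (b : H -> H -> W), bilinear_map b ->
  S2 b (Delta (phit u)) = \sum_(e <- delta_t K u) e.1.1 *: b (phib e.1.2) (phib e.2).
Proof.
elim: u => [k|l IHl r IHr] W b hb /=.
  rewrite /S2 (gprim k hb) !big_cons !big_nil /=.
  by rewrite !scale1r.
rewrite /S2 (DeltaM _ _ hb) -!/(S2 b _) !S2_cat !big_cat /=.
congr (_ + (_ + _)).
- rewrite /S2 !big_map.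
  pose b1 := fun u v => b u (mul v (phit r)).
  have hb1 : bilinear_map b1.
    split=> k x y z; rewrite /b1.
      by apply: (bil_l hb).
    by rewrite mulL; apply: (bil_r hb).
  have := IHl W b1 hb1; rewrite /S2 /b1 => ->.
  by apply: eq_bigr => e _ /=; case: e.2 => [v|] /=; rewrite ?mul1x ?mulx1.
- rewrite /S2 !big_map.
  pose b2 := fun u v => b (mul (phit l) u) v.
  have hb2 : bilinear_map b2.
    split=> k x y z; rewrite /b2.
      by rewrite mulR; apply: (bil_l hb).
    by apply: (bil_r hb).
  have := IHr W b2 hb2; rewrite /S2 /b2 => ->.
  by apply: eq_bigr => e _ /=; case: e.1.2 => [v|] /=; rewrite ?mul1x ?mulx1.
- rewrite /S2 !big_cons !big_nil /= !addr0.
  by rewrite (linfN (bil_l hb _)) scaleN1r.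
Qed.

Lemma Delta_phib bb (W : lmodType K) (b : H -> H -> W) : bilinear_map b ->
  S2 b (Delta (phib bb)) = \sum_(e <- delta_b K bb) e.1.1 *: b (phib e.1.2) (phib e.2).
Proof.
case: bb => [u|] hb /=; first exact: Delta_phit.
by rewrite /S2 (Delta1 hb) !big_cons !big_nil /= scale1r.
Qed.

Lemma Delta_phi s (W : lmodType K) (b : H -> H -> W) : bilinear_map b ->
  S2 b (Delta (phi s)) = \sum_(e <- fdelta s) e.1.1 *: b (phib e.1.2) (phib e.2).
Proof.
move=> hb; elim: s => [|x s IH].
  by rewrite phi_nil Delta0 // /fdelta big_nil.
rewrite /phi big_cons -/(phi s) /S2 (DeltaL _ _ _ hb) -!/(S2 b _) S2_cat S2_tscale //.
rewrite IH Delta_phib // /fdelta /= big_cat /= big_map scaler_sumr.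
congr (_ + _); apply: eq_bigr => e _ /=; by rewrite scalerA.
Qed.

Definition prim_list (s : fsum K) : fsum2 K :=
  [seq (x.1, x.2, None) | x <- s] ++ [seq (x.1, None, x.2) | x <- s].

Lemma phi_prim s :
  (forall b1 b2, coef2 (fdelta s) b1 b2 = coef2 (prim_list s) b1 b2) ->
  teq2 (Delta (phi s)) [:: (phi s, one); (one, phi s)].
Proof.
move=> hc W b hb; rewrite -/(S2 b _) Delta_phi //.
rewrite (group2 (fun b1 b2 => b (phib b1) (phib b2)) hc).
rewrite /prim_list big_cat !big_map /= !big_cons big_nil /= addr0.
rewrite /phi (linf_sum (bil_l hb _)) (linf_sum (bil_r hb _)).
congr (_ + _); apply: eq_bigr => x _.
  by rewrite (linfZ (bil_l hb _)).
by rewrite (linfZ (bil_r hb _)).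
Qed.

Lemma mag_act_sum n (p : Mag K n) (x : 'I_n -> H) :
  mag_act +%R 0 *:%R mul p x =
  \sum_(e <- p) e.1.1 *: eval_tree 0 mul e.1.2
        [seq x (((e.2 : 'S_n)^-1)%g i) | i <- enum 'I_n].
Proof. by elim: p => [|e p IH]; rewrite ?big_nil ?big_cons //= IH. Qed.

Lemma phi_eval_free n (p : Mag K n) (x : 'I_n -> H) :
  (forall i : 'I_n, g i = x i) ->
  mag_act +%R 0 *:%R mul p x = phi (eval_free p).
Proof.
move=> hx; elim: p => [|e p IH]; first by rewrite /eval_free /= phi_nil.
rewrite mag_act_sum big_cons -mag_act_sum IH.
have -> : eval_free (e :: p) = fscale e.1.1 (eval_tree [::] (@fmul K) e.1.2
   [seq fgen K (((e.2 : 'S_n)^-1)%g i) | i <- enum 'I_n]) ++ eval_free p by [].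
rewrite phi_cat phi_scale phi_eval_tree -map_comp.
congr (_ *: eval_tree _ _ _ _ + _).
apply: eq_map => i /=; rewrite /phi big_cons big_nil /= addr0 scale1r.
by rewrite hx.
Qed.

End GenB.
Lemma prim_eps (K : fieldType) (H : lmodType K) (mul : H -> H -> H) (one : H)
  (Delta : H -> seq (H * H)) (eps : H -> K) :
  AsMag_bialgebra mul one Delta eps ->
  forall X, teq2 (Delta X) [:: (X, one); (one, X)] -> eps X = 0.
Proof.
move=> [mL [mR [m1x [mx1 [DL [epsL [coas [couni [D1 DM]]]]]]]]] X hX.
have eps0 : eps 0 = 0.
  have := epsL 1 0 0; rewrite scale1r addr0 mul1r.
  by move/(congr1 (fun v => v - eps 0)); rewrite subrr addrK => <-.
have epsZ k x : eps (k *: x) = k * eps x by have := epsL k x 0; rewrite addr0 eps0 addr0.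
have epsD x y : eps (x + y) = eps x + eps y by have := epsL 1 x y; rewrite scale1r mul1r.
pose b := fun (u v : H) => eps u *: v.
have hb : bilinear_map b.
  split=> k x y z; rewrite /b.
    by rewrite epsL scalerDl scalerA.
  by rewrite scalerDr !scalerA mulrC.
have eX : X = eps X *: one + eps one *: X.
  have := (couni X).1; rewrite (hX _ b hb) !big_cons big_nil /= addr0 => e.
  by rewrite -{1}e.
have e1 : one = eps one *: one.
  have := (couni one).1; rewrite (D1 _ b hb) big_cons big_nil /= addr0 => e.
  by rewrite -{1}e.
have ee : eps one = eps one * eps one by rewrite {1}e1 epsZ.
have [z|nz] := eqVneq (eps one) 0.
  have o0 : one = 0 by rewrite e1 z scale0r.
  have := m1x X; rewrite o0.
  have := mL 0 0 0 X; rewrite scale0r add0r scale0r add0r => ->.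
  have := mL 1 0 0 X; rewrite scale1r addr0 scale1r.
  move/(congr1 (fun v => v - mul 0 X)); rewrite subrr addrK => <- <-.
  by [].
have o1 : eps one = 1.
  by apply: (mulIf nz); rewrite mul1r -ee.
have := congr1 eps eX; rewrite epsD !epsZ o1 mulr1 mul1r.
by move/(congr1 (fun v => v - eps X)); rewrite subrr addrK => <-.
Qed.

Lemma part2 (K : fieldType) (H : lmodType K) (mul : H -> H -> H) (one : H)
  (Delta : H -> seq (H * H)) (eps : H -> K) :
  AsMag_bialgebra mul one Delta eps ->
  forall (n : nat) (p : Mag K n) (x : 'I_n -> H),
  PrimMag p -> (forall i, PrimH one Delta eps (x i)) ->
  PrimH one Delta eps (mag_act +%R 0 *:%R mul p x).
Proof.
move=> hB; have hB' := hB.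
move: hB' => [mL [mR [m1x [mx1 [DL [epsL [coas [couni [D1 DM]]]]]]]]] n p x [_ [_ hc]] hx.
pose g k := if insub k is Some i then x i else 0.
have gx : forall i : 'I_n, g i = x i by move=> i; rewrite /g valK.
have gprim : forall k, teq2 (Delta (g k)) [:: (g k, one); (one, g k)].
  move=> k; rewrite /g; case: insubP => [i _ _|_]; first by case: (hx i).
  move=> W b hb; have := Delta0 DL hb; rewrite /S2 => ->.
  rewrite !big_cons big_nil /= addr0 (linf0 (bil_l hb _)) (linf0 (bil_r hb _)).
  by rewrite addr0.
have prim := phi_prim mL mR m1x mx1 DL D1 DM gprim hc.
rewrite (phi_eval_free mL mR m1x mx1 p gx).
split; last exact: prim.
exact: prim_eps hB _ prim.
Qed.
Section FreeH.
Variable K : fieldType.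
Local Notation HM := {malg K[option mterm]}.
Implicit Types (x y : HM).

Definition mulH x y : HM := Lx (fun i => Lx (fun j => (<< bmul i j >> : HM)) y) x.
Definition oneH : HM := << None >>.
Definition DeltaH x : seq (HM * HM) :=
  flatten [seq [seq ((x@_b * d.1.1) *: (<< d.1.2 >> : HM), (<< d.2 >> : HM))
               | d <- delta_b K b] | b <- msupp x].

Lemma scaleU c (k : option mterm) : c *: (<< k >> : HM) = << c *g k >>.
Proof. by apply/malgP => k'; rewrite mcoeffZ !mcoeffU mulr_natr. Qed.

Lemma Lx_id x : Lx (fun k => (<< k >> : HM)) x = x.
Proof.
rewrite {2}(monalgE x) /Lx; apply: eq_bigr => k _; exact: scaleU.
Qed.

Lemma linf_Lx (W W' : lmodType K) (f : W -> W') (gam : option mterm -> W) x :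
  linf f -> f (Lx gam x) = Lx (fun k => f (gam k)) x.
Proof.
move=> hf; rewrite /Lx (linf_sum hf); apply: eq_bigr => k _.
by rewrite (linfZ hf).
Qed.

Lemma Lx_lf (W : lmodType K) (gam : option mterm -> W) : linf (Lx gam).
Proof. by move=> c u v; apply: Lx_lin. Qed.

Lemma Lx_swap (W : lmodType K) (F : option mterm -> option mterm -> W) x y :
  Lx (fun j => Lx (fun i => F i j) x) y = Lx (fun i => Lx (fun j => F i j) y) x.
Proof.
rewrite /Lx.
under eq_bigr do rewrite scaler_sumr.
rewrite exchange_big /=; apply: eq_bigr => i _.
rewrite scaler_sumr; apply: eq_bigr => j _.
by rewrite !scalerA mulrC.
Qed.

Lemma Lx_sumfun (W : lmodType K) (I : Type) (s : seq I) (c : I -> K)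
   (gam : I -> option mterm -> W) x :
  \sum_(d <- s) c d *: Lx (gam d) x = Lx (fun k => \sum_(d <- s) c d *: gam d k) x.
Proof.
elim: s => [|d s IH]; first by rewrite big_nil /Lx big1 // => k _; rewrite big_nil scaler0.
by rewrite big_cons IH -Lx_fun; apply: Lx_ext => k; rewrite big_cons.
Qed.

Lemma mulH_L : forall (k : K) x y z, mulH (k *: x + y) z = k *: mulH x z + mulH y z.
Proof. by move=> k x y z; rewrite /mulH Lx_lin. Qed.

Lemma mulH_R : forall (k : K) x y z, mulH z (k *: x + y) = k *: mulH z x + mulH z y.
Proof.
move=> k x y z; rewrite /mulH -Lx_fun; apply: Lx_ext => i.
by rewrite Lx_lin.
Qed.

Lemma mulHUl a y : mulH << a >> y = Lx (fun j => (<< bmul a j >> : HM)) y.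
Proof. by rewrite /mulH LxU scale1r. Qed.

Lemma mulHUr x b : mulH x << b >> = Lx (fun i => (<< bmul i b >> : HM)) x.
Proof. by rewrite /mulH; apply: Lx_ext => i; rewrite LxU scale1r. Qed.

Lemma mulHUU a b : mulH << a >> << b >> = << bmul a b >>.
Proof. by rewrite mulHUl LxU scale1r. Qed.

Lemma mulH1x x : mulH oneH x = x.
Proof. by rewrite /oneH mulHUl -{2}(Lx_id x). Qed.

Lemma mulHx1 x : mulH x oneH = x.
Proof.
rewrite /oneH mulHUr -{2}(Lx_id x); apply: Lx_ext => i.
by case: i.
Qed.

Definition hb (W : lmodType K) (b : HM -> HM -> W) (k : option mterm) : W :=
  \sum_(d <- delta_b K k) d.1.1 *: b << d.1.2 >> << d.2 >>.

Lemma S2_DeltaH (W : lmodType K) (b : HM -> HM -> W) x : bilinear_map b ->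
  S2 b (DeltaH x) = Lx (hb b) x.
Proof.
move=> hbb; rewrite /S2 /DeltaH big_flatten /= big_map /Lx.
apply: eq_bigr => k _; rewrite big_map /hb scaler_sumr; apply: eq_bigr => d _ /=.
by rewrite (linfZ (bil_l hbb _)) scalerA.
Qed.

Lemma DeltaH_L : forall (k : K) x y,
  teq2 (DeltaH (k *: x + y)) (tscale k (DeltaH x) ++ DeltaH y).
Proof.
move=> k x y W b hbb; rewrite -!/(S2 b _) S2_cat S2_tscale //.
by rewrite !S2_DeltaH // Lx_lin.
Qed.

Lemma DeltaH_1 : teq2 (DeltaH oneH) [:: (oneH, oneH)].
Proof.
move=> W b hbb; rewrite -!/(S2 b _) S2_DeltaH // /oneH LxU /hb /S2.
by rewrite !big_cons !big_nil /= !scale1r.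
Qed.

Lemma bil_postR (W : lmodType K) (b : HM -> HM -> W) (F : HM -> HM) :
  bilinear_map b -> linf F -> bilinear_map (fun u v => b u (F v)).
Proof.
move=> hbb hF; split=> k x y z.
  by apply: (bil_l hbb).
by rewrite hF; apply: (bil_r hbb).
Qed.

Lemma bil_postL (W : lmodType K) (b : HM -> HM -> W) (F : HM -> HM) :
  bilinear_map b -> linf F -> bilinear_map (fun u v => b (F u) v).
Proof.
move=> hbb hF; split=> k x y z.
  by rewrite hF; apply: (bil_l hbb).
by apply: (bil_r hbb).
Qed.

Lemma bil_expand (W : lmodType K) (b : HM -> HM -> W) x y : bilinear_map b ->
  b x y = Lx (fun i => Lx (fun j => b << i >> << j >>) y) x.
Proof.
move=> hbb; rewrite -{1}(Lx_id x) (linf_Lx _ _ (bil_l hbb _)).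
apply: Lx_ext => i; rewrite -{1}(Lx_id y).
by rewrite (linf_Lx _ _ (bil_r hbb _)).
Qed.

Lemma hb_mul (W : lmodType K) (b : HM -> HM -> W) i j :
  hb b (bmul i j) =
  \sum_(d <- delta_b K i) d.1.1 *: b << d.1.2 >> << bmul d.2 j >> +
  \sum_(d <- delta_b K j) d.1.1 *: b << bmul i d.1.2 >> << d.2 >> -
  b << i >> << j >>.
Proof.
case: i => [l|] /=.
  case: j => [r|] /=.
    rewrite /hb /= !big_cat /= !big_map big_cons big_nil addr0 scaleN1r.
    by rewrite addrA.
  rewrite /hb /= big_cons big_nil addr0 scale1r addrK.
  by apply: eq_bigr => d _; case: d.2.
rewrite /hb /= big_cons big_nil addr0 scale1r /=.
by rewrite addrAC subrr add0r.
Qed.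

Lemma Lx_comb3 (W : lmodType K) (f1 f2 f3 : option mterm -> W) x :
  Lx (fun k => f1 k + (f2 k - f3 k)) x = Lx f1 x + (Lx f2 x - Lx f3 x).
Proof.
have eD (g1 g2 : option mterm -> W) : Lx (fun k => g1 k + g2 k) x = Lx g1 x + Lx g2 x.
  by rewrite -[LHS](Lx_ext (gam1 := fun k => 1 *: g1 k + g2 k)) ?Lx_fun ?scale1r // => k; rewrite scale1r.
have eN (g1 : option mterm -> W) : Lx (fun k => - g1 k) x = - Lx g1 x.
  rewrite -[LHS](Lx_ext (gam1 := fun k => (-1) *: g1 k + 0)).
    have e0 : Lx (fun=> 0 : W) x = 0 by rewrite /Lx big1 // => k _; rewrite scaler0.
    by rewrite (Lx_fun g1 (fun=> 0)) scaleN1r e0 addr0.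
  by move=> k; rewrite addr0 scaleN1r.
by rewrite eD eD eN.
Qed.

Lemma DeltaH_M : forall x y, teq2 (DeltaH (mulH x y))
  ([seq (z.1, mulH z.2 y) | z <- DeltaH x] ++ [seq (mulH x z.1, z.2) | z <- DeltaH y]
   ++ [:: (- x, y)]).
Proof.
move=> x y W b hbb; rewrite -!/(S2 b _) !S2_cat S2_DeltaH //.
have e1 : S2 b [seq (z.1, mulH z.2 y) | z <- DeltaH x] =
    S2 (fun u v => b u (mulH v y)) (DeltaH x) by rewrite /S2 big_map.
have e2 : S2 b [seq (mulH x z.1, z.2) | z <- DeltaH y] =
    S2 (fun u v => b (mulH x u) v) (DeltaH y) by rewrite /S2 big_map.
have hb1 := bil_postR hbb (fun k u v => mulH_L k u v y).
have hb2 := bil_postL hbb (fun k u v => mulH_R k u v x).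
rewrite e1 e2 !S2_DeltaH // /S2 big_cons big_nil addr0 /=.
rewrite (linfN (bil_l hbb _)) (bil_expand _ _ hbb).
rewrite /mulH (linf_Lx _ _ (Lx_lf _)).
under [LHS]Lx_ext => i do rewrite (linf_Lx _ _ (Lx_lf _)).
under [LHS]Lx_ext => i do under Lx_ext => j do rewrite LxU scale1r.
have -> : Lx (hb (fun u v => b u (Lx (fun i => Lx (fun j => (<< bmul i j >> : HM)) y) v))) x
   = Lx (fun i => Lx (fun j => \sum_(d <- delta_b K i) d.1.1 *: b << d.1.2 >> << bmul d.2 j >>) y) x.
  apply: Lx_ext => i; rewrite /hb -Lx_sumfun; apply: eq_bigr => d _.
  by rewrite LxU scale1r (linf_Lx _ _ (bil_r hbb _)).
have -> : Lx (hb (fun u v => b (Lx (fun i => Lx (fun j => (<< bmul i j >> : HM)) u) x) v)) y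
   = Lx (fun i => Lx (fun j => \sum_(d <- delta_b K j) d.1.1 *: b << bmul i d.1.2 >> << d.2 >>) y) x.
  rewrite -Lx_swap; apply: Lx_ext => j; rewrite /hb -Lx_sumfun; apply: eq_bigr => d _.
  congr (_ *: _); rewrite (linf_Lx _ _ (bil_l hbb _)); apply: Lx_ext => i.
  by rewrite LxU scale1r.
rewrite -!Lx_comb3; apply: Lx_ext => i; rewrite -!Lx_comb3.
by apply: Lx_ext => j; rewrite hb_mul addrA.
Qed.

End FreeH.
Lemma prim_list_sum (K : fieldType) (H : lmodType K) (mul : H -> H -> H) (one : H)
  (g : nat -> H) (W : lmodType K) (b : H -> H -> W) s : bilinear_map b ->
  \sum_(e <- prim_list s) e.1.1 *: b (phib mul one g e.1.2) (phib mul one g e.2)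
  = b (phi mul one g s) one + b one (phi mul one g s).
Proof.
move=> hb; rewrite /prim_list big_cat !big_map /=.
rewrite /phi (linf_sum (bil_l hb _)) (linf_sum (bil_r hb _)).
congr (_ + _); apply: eq_bigr => x _.
  by rewrite (linfZ (bil_l hb _)).
by rewrite (linfZ (bil_r hb _)).
Qed.

Lemma act_prim (K : fieldType) (H : lmodType K) (mul : H -> H -> H) (one : H)
  (Delta : H -> seq (H * H))
  (mL : forall (k : K) x y z, mul (k *: x + y) z = k *: mul x z + mul y z)
  (mR : forall (k : K) x y z, mul z (k *: x + y) = k *: mul z x + mul z y)
  (m1x : forall x, mul one x = x) (mx1 : forall x, mul x one = x)
  (DL : forall (k : K) x y, teq2 (Delta (k *: x + y)) (tscale k (Delta x) ++ Delta y))
  (D1 : teq2 (Delta one) [:: (one, one)])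
  (DM : forall x y, teq2 (Delta (mul x y))
     ([seq (z.1, mul z.2 y) | z <- Delta x] ++ [seq (mul x z.1, z.2) | z <- Delta y]
      ++ [:: (- x, y)]))
  n (p : Mag K n) (x : 'I_n -> H) :
  PrimMag p -> (forall i, teq2 (Delta (x i)) [:: (x i, one); (one, x i)]) ->
  teq2 (Delta (mag_act +%R 0 *:%R mul p x)) [:: (mag_act +%R 0 *:%R mul p x, one);
                                             (one, mag_act +%R 0 *:%R mul p x)].
Proof.
move=> [_ [_ hc]] hx.
pose g k := if insub k is Some i then x i else 0.
have gx : forall i : 'I_n, g i = x i by move=> i; rewrite /g valK.
have gprim : forall k, teq2 (Delta (g k)) [:: (g k, one); (one, g k)].
  move=> k; rewrite /g; case: insubP => [i _ _|_]; first exact: hx.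
  move=> W b hb; have := Delta0 DL hb; rewrite /S2 => ->.
  rewrite !big_cons big_nil /= addr0 (linf0 (bil_l hb _)) (linf0 (bil_r hb _)).
  by rewrite addr0.
rewrite (phi_eval_free mL mR m1x mx1 p gx).
exact: (phi_prim mL mR m1x mx1 DL D1 DM gprim hc).
Qed.

Section Bridge.
Variable K : fieldType.
Local Notation HM := {malg K[option mterm]}.
Definition gen (k : nat) : HM := << Some (MLeaf k) >>.
Definition iota_ (s : fsum K) : HM := phi (@mulH K) (oneH K) gen s.

Lemma phit_U u : phit (@mulH K) gen u = << Some u >>.
Proof. by elim: u => [k|a IHa b IHb] //=; rewrite IHa IHb mulHUU. Qed.
Lemma phib_U bb : phib (@mulH K) (oneH K) gen bb = << bb >>.
Proof. by case: bb => [u|] //=; rewrite phit_U. Qed.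

Lemma iota_coef s bb : (iota_ s)@_bb = coef s bb.
Proof.
rewrite /iota_ /phi /coef; elim: s => [|e s IH]; first by rewrite !big_nil mcoeff0.
rewrite !big_cons mcoeffD IH mcoeffZ phib_U mcoeffU.
by case: ifP => _; rewrite ?mulr1n ?mulr0n ?mulr1 ?mulr0 ?add0r.
Qed.

Lemma coef2_test (D : fsum2 K) b1 b2 :
  coef2 D b1 b2 = \sum_(e <- D) e.1.1 * ((<< e.1.2 >> : HM)@_b1 * (<< e.2 >> : HM)@_b2).
Proof.
rewrite /coef2; elim: D => [|e D IH]; first by rewrite !big_nil.
rewrite !big_cons IH !mcoeffU.
by case: (e.1.2 == b1); case: (e.2 == b2) => /=; rewrite ?mulr1n ?mulr0n ?mulr1 ?mulr0 ?mul0r ?add0r.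
Qed.

Definition ctest (b1 b2 : option mterm) (u v : HM) : K^o := u@_b1 * v@_b2.

Lemma ctest_bil b1 b2 : bilinear_map (ctest b1 b2).
Proof.
split=> k x y z; rewrite /ctest mcoeffD mcoeffZ.
  by rewrite mulrDl -mulrA.
by rewrite mulrDr mulrCA.
Qed.

Lemma gen_prim k : teq2 (DeltaH (gen k)) [:: (gen k, oneH K); (oneH K, gen k)].
Proof.
move=> W b hbb; rewrite -!/(S2 b _) S2_DeltaH // /gen LxU /hb /S2.
by rewrite /= !big_cons !big_nil /= !scale1r.
Qed.

Lemma delta_t_nn u : all (fun d => (d.1.2 != None) || (d.2 != None)) (delta_t K u).
Proof.
elim: u => [k|l IHl r IHr] //=.
rewrite !all_cat /= andbT; apply/andP; split.
- by rewrite all_map; apply/allP => d _ /=; case: d.2 => [v|] /=; rewrite orbT.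
- by rewrite all_map; apply/allP => d _ /=; case: d.1.2 => [v|] /=.
Qed.

Lemma bridge s : teq2 (DeltaH (iota_ s)) [:: (iota_ s, oneH K); (oneH K, iota_ s)] ->
  free_prim s.
Proof.
move=> hP.
have Dphi := Delta_phi (@mulH_L K) (@mulH_R K) (@mulH1x K) (@mulHx1 K)
    (@DeltaH_L K) (@DeltaH_1 K) (@DeltaH_M K) gen_prim s.
have hc : forall b1 b2, coef2 (fdelta s) b1 b2 = coef2 (prim_list s) b1 b2.
  move=> b1 b2; rewrite !coef2_test.
  have := Dphi _ _ (ctest_bil b1 b2); rewrite /S2 (hP _ _ (ctest_bil b1 b2)).
  rewrite -/(iota_ s).
  under [in RHS]eq_bigr do rewrite !phib_U.
  move=> <-.
  have := prim_list_sum (@mulH K) (oneH K) gen s (ctest_bil b1 b2).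
  under eq_bigr do rewrite !phib_U.
  by move=> ->; rewrite !big_cons big_nil addr0.
split=> //.
have := hc None None; rewrite !coef2_test.
have -> : \sum_(e <- fdelta s) e.1.1 * ((<< e.1.2 >> : HM)@_None * (<< e.2 >> : HM)@_None)
     = coef s None.
  rewrite /fdelta big_flatten /= big_map /coef [RHS]big_mkcond /=.
  apply: eq_bigr => x _; rewrite big_map.
  case: x => c [u|] /=.
    rewrite big1_seq // => d /andP[_ hd].
    have := allP (delta_t_nn u) d hd.
    rewrite !mcoeffU; case: d {hd} => [[c' [u1|]] [u2|]] //= _;
      by rewrite (_ : (false%:R : K) = 0) // ?mul0r ?mulr0.
  by rewrite big_cons big_nil !mcoeffUU !mulr1 addr0.
rewrite /prim_list big_cat !big_map /=.
have -> : \sum_(j <- s) j.1 * ((<< j.2 >> : HM)@_None * (<< None >> : HM)@_None) = coef s None.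
  by rewrite /coef [RHS]big_mkcond; apply: eq_bigr => x _; rewrite mcoeffUU mulr1 mcoeffU;
     case: (x.2 == None); rewrite ?mulr1n ?mulr0n ?mulr1 ?mulr0.
have -> : \sum_(j <- s) j.1 * ((<< None >> : HM)@_None * (<< j.2 >> : HM)@_None) = coef s None.
  by rewrite /coef [RHS]big_mkcond; apply: eq_bigr => x _; rewrite mcoeffUU mul1r mcoeffU;
     case: (x.2 == None); rewrite ?mulr1n ?mulr0n ?mulr1 ?mulr0.
rewrite /fcounit; move/(congr1 (fun v => v - coef s None)); rewrite subrr addrK => e.
by rewrite -e.
Qed.

End Bridge.
Fixpoint tree_eqb (a b : tree) : bool :=
  match a, b with
  | Lf, Lf => true
  | Nd a1 a2, Nd b1 b2 => tree_eqb a1 b1 && tree_eqb a2 b2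
  | _, _ => false
  end.

Lemma tree_eqP : Equality.axiom tree_eqb.
Proof.
elim=> [|a1 IH1 a2 IH2] [|b1 b2] /=; try by constructor.
apply: (iffP andP) => [[/IH1 -> /IH2 ->]|[<- <-]] //.
by split; [apply/IH1|apply/IH2].
Qed.

HB.instance Definition _ := hasDecEq.Build tree tree_eqP.

Lemma eval_tree_morph (A B : Type) (h : A -> B) (mA : A -> A -> A) (mB : B -> B -> B)
  (a0 : A) (b0 : B) t xs :
  (forall a b, h (mA a b) = mB (h a) (h b)) -> size xs = leaves t ->
  h (eval_tree a0 mA t xs) = eval_tree b0 mB t (map h xs).
Proof.
move=> hm; elim: t xs => [|l IHl r IHr] xs /=.
  by case: xs => [|x [|y xs]].
move=> hs; rewrite hm IHl ?IHr ?map_take ?map_drop //.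
  by rewrite size_drop hs addKn.
by rewrite size_takel // hs leq_addr.
Qed.

Lemma labels_eval t ls : size ls = leaves t ->
  labels (eval_tree (MLeaf 0) MNode t (map MLeaf ls)) = ls.
Proof.
elim: t ls => [|l IHl r IHr] ls /=.
  by case: ls => [|x [|y ls]].
move=> hs; rewrite -map_take -map_drop IHl ?IHr ?cat_take_drop //.
  by rewrite size_drop hs addKn.
by rewrite size_takel // hs leq_addr.
Qed.

Lemma leaves_shape u : leaves (Defs.shape u) = size (labels u).
Proof. by elim: u => [k|a IHa b IHb] //=; rewrite IHa IHb size_cat. Qed.

Lemma eval_shape u : eval_tree (MLeaf 0) MNode (Defs.shape u) (map MLeaf (labels u)) = u.
Proof.
elim: u => [k|a IHa b IHb] //=.
rewrite map_cat leaves_shape -(size_map MLeaf) take_size_cat // drop_size_cat //.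
by rewrite IHa IHb.
Qed.

Lemma perm_flatten_map (T U : eqType) (L : T -> seq U) (s1 s2 : seq T) :
  perm_eq s1 s2 -> perm_eq (flatten (map L s1)) (flatten (map L s2)).
Proof.
move=> hp; apply/seq.permP => a; rewrite !count_flatten !sumnE !big_map.
exact: perm_big.
Qed.

Lemma perm_enum_val n (s : 'S_n) :
  perm_eq [seq val (s i) | i <- enum 'I_n] (iota 0 n).
Proof.
rewrite -val_enum_ord (map_comp val s) perm_map // uniq_perm ?enum_uniq //.
  by rewrite map_inj_uniq ?enum_uniq //; apply: perm_inj.
by move=> i; rewrite mem_enum; apply/mapP; exists (s^-1 i)%g; rewrite ?mem_enum ?permKV.
Qed.

Lemma perm_of_labelsE M ls : perm_eq ls (iota 0 M) ->
  [seq val (((perm_of_labels M ls)^-1)%g i) | i <- enum 'I_M] = ls.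
Proof.
move=> hp.
have hsz : size ls = M by rewrite (perm_size hp) size_iota.
have hlt j : (j < M)%N -> (nth 0%N ls j < M)%N.
  move=> jM; have : nth 0%N ls j \in iota 0 M by rewrite -(perm_mem hp) mem_nth ?hsz.
  by rewrite mem_iota.
have hu : uniq ls by rewrite (perm_uniq hp) iota_uniq.
pose F := [ffun j : 'I_M => insubd j (nth 0%N ls j)].
have hF j : val (F j) = nth 0%N ls j by rewrite ffunE val_insubd hlt.
have injF : injectiveb (aT:='I_M) (rT:='I_M) F.
  apply/(injectiveP F) => i j; move/(congr1 val); rewrite !hF => e; apply/val_inj.
  by apply/eqP; rewrite -(nth_uniq 0%N _ _ hu) ?hsz ?e ?ltn_ord.
rewrite /perm_of_labels invgK.
have hP i : val ((insubd (1%g : 'S_M) F) i) = nth 0%N ls i.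
  rewrite -pvalE.
  have -> : pval (insubd (1%g : 'S_M) F) = val (insubd (1%g : 'S_M) F) by [].
  by rewrite val_insubd injF hF.
rewrite (eq_map hP) (map_comp (nth 0%N ls) val) val_enum_ord -hsz.
by rewrite -/(mkseq _ _) mkseq_nth.
Qed.

Lemma labels_shift k u : labels (shift_term k u) = map (addn k) (labels u).
Proof. by elim: u => [j|a IHa b IHb] //=; rewrite IHa IHb map_cat. Qed.
Section Comp.
Variables (K : fieldType) (n : nat) (m : 'I_n -> nat) (p : Mag K n)
  (q : forall i : 'I_n, Mag K (m i)).
Hypothesis inp : in_Mag p.
Hypothesis inq : forall i, in_Mag (q i).
Local Notation HM := {malg K[option mterm]}.
Local Notation M := (\sum_(i < n) m i)%N.

Definition fs (k : nat) : seq (K * mterm) :=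
  match @insub _ (fun k => (k < n)%N) 'I_n k with
  | Some i => [seq (x.1.1, shift_term (offset m i) (to_term x.1.2 x.2)) | x <- q i]
  | None => [::]
  end.

Lemma fs_val (i : 'I_n) :
  fs i = [seq (x.1.1, shift_term (offset m i) (to_term x.1.2 x.2)) | x <- q i].
Proof. by rewrite /fs valK. Qed.

Lemma mag_compE : mag_comp p q =
  flatten [seq [seq (x.1.1 * y.1, Defs.shape y.2, perm_of_labels M (labels y.2))
               | y <- subst_term fs (to_term x.1.2 x.2)] | x <- p].
Proof. by []. Qed.

Definition Lk (k : nat) : seq nat :=
  match @insub _ (fun k => (k < n)%N) 'I_n k with
  | Some i => iota (offset m i) (m i)
  | None => [::]
  end.

Lemma labels_subst u y : y \in subst_term fs u ->
  (forall k, k \in labels u -> forall z, z \in fs k -> perm_eq (labels z.2) (Lk k)) ->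
  perm_eq (labels y.2) (flatten (map Lk (labels u))).
Proof.
elim: u y => [k|a IHa b IHb] y /=.
  by move=> hy h; rewrite cats0; apply: h => //; rewrite inE.
case/allpairsP => -[y1 y2] [h1 h2 ->] h /=.
rewrite map_cat flatten_cat perm_cat //.
  by apply: IHa => // k hk; apply: h; rewrite mem_cat hk.
by apply: IHb => // k hk; apply: h; rewrite mem_cat hk orbT.
Qed.

Lemma to_term_labels (N : nat) t (s : 'S_N) : leaves t = N ->
  labels (to_term t s) = [seq val ((s^-1)%g i) | i <- enum 'I_N].
Proof.
move=> ht; rewrite /to_term.
have -> : [seq MLeaf (val ((s^-1)%g i)) | i <- enum 'I_N] =
   map MLeaf [seq val ((s^-1)%g i) | i <- enum 'I_N] by rewrite -map_comp.
rewrite labels_eval //.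
by rewrite size_map size_enum_ord.
Qed.

Definition m' (k : nat) : nat := if @insub _ (fun k => (k < n)%N) 'I_n k is Some i then m i else 0%N.

Lemma offsetE (i : 'I_n) : offset m i = (\sum_(j < i) m' j)%N.
Proof.
rewrite /offset.
have -> : (\sum_(j < n | (j < i)%N) m j = \sum_(j < n | (j < i)%N) m' j)%N.
  by apply: eq_bigr => j _; rewrite /m' valK.
rewrite -(big_mkord (fun j => (j < i)%N) m').
have -> : (\sum_(j < i) m' j = \sum_(0 <= j < i) m' j)%N by rewrite big_mkord.
rewrite (big_nat_widen 0 i n) ?(ltnW (ltn_ord i)) //.
Qed.

Lemma Lk_lt k : (k < n)%N -> Lk k = iota (\sum_(j < k) m' j) (m' k).
Proof.
move=> kn; rewrite /Lk /m'; case: insubP => [i _ ei|]; last by rewrite kn.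
by rewrite offsetE ei.
Qed.

Lemma flatten_Lk a : (a <= n)%N ->
  flatten [seq Lk k | k <- iota 0 a] = iota 0 (\sum_(k < a) m' k).
Proof.
elim: a => [|a IH] han; first by rewrite big_ord0.
rewrite -addn1 iotaD map_cat flatten_cat IH ?(ltnW han) // add0n /= cats0.
by rewrite addn1 big_ord_recr /= iotaD add0n Lk_lt.
Qed.

Lemma M_m' : M = (\sum_(k < n) m' k)%N.
Proof. by apply: eq_bigr => i _; rewrite /m' valK. Qed.

Lemma labels_comp x y : x \in p -> y \in subst_term fs (to_term x.1.2 x.2) ->
  perm_eq (labels y.2) (iota 0 M).
Proof.
move=> xp yS.
have lx : leaves x.1.2 = n by apply/eqP; apply: (allP inp).
apply: perm_trans (labels_subst yS _) _.
  move=> k; rewrite to_term_labels // => /mapP[i _ ->] z.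
  rewrite fs_val => /mapP[x' x'q ->] /=.
  have lx' : leaves x'.1.2 = m (((x.2 : 'S_n)^-1)%g i).
    by apply/eqP; apply: (allP (inq _)).
  rewrite labels_shift to_term_labels // /Lk valK -[X in iota X _]addn0 iotaDl.
  by rewrite perm_map // perm_enum_val.
rewrite to_term_labels // M_m' -flatten_Lk //.
exact: perm_flatten_map (perm_enum_val _).
Qed.

Definition J (ys : seq (K * mterm)) : HM := \sum_(y <- ys) y.1 *: (<< Some y.2 >> : HM).
Definition G (i : 'I_n) : HM :=
  mag_act +%R 0 *:%R (@mulH K) (q i) (fun j => gen K (offset m i + j)).

Lemma linmulHL (z : HM) : linf ((@mulH K)^~ z).
Proof. by move=> k x y; apply: mulH_L. Qed.
Lemma linmulHR (z : HM) : linf (@mulH K z).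
Proof. by move=> k x y; apply: mulH_R. Qed.

Lemma J_node a b : J (subst_term fs (MNode a b)) =
  mulH (J (subst_term fs a)) (J (subst_term fs b)).
Proof.
rewrite /= /J big_allpairs_dep (linf_sum (linmulHL _)); apply: eq_bigr => y1 _.
rewrite (linfZ (linmulHL _)) (linf_sum (linmulHR _)) scaler_sumr; apply: eq_bigr => y2 _.
by rewrite (linfZ (linmulHR _)) mulHUU scalerA mulrC.
Qed.

Lemma map_gen (f : 'I_n -> nat) (N : nat) (s : seq 'I_N) (F : 'I_N -> nat) :
  [seq gen K (F i) | i <- s] =
  map (fun u => (<< Some u >> : HM)) (map MLeaf [seq F i | i <- s]).
Proof. by rewrite -!map_comp. Qed.

Lemma map_MLeaf (T : Type) (f : T -> nat) (s : seq T) :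
  [seq MLeaf (f i) | i <- s] = map MLeaf (map f s).
Proof. by rewrite -map_comp. Qed.

Lemma J_fs (i : 'I_n) : J (fs i) = G i.
Proof.
rewrite fs_val /J big_map /G mag_act_sum !big_seq; apply: eq_bigr => x hx.
have lx : leaves x.1.2 = m i by apply/eqP; apply: (allP (inq i)).
congr (_ *: _).
rewrite (map_gen m) -(@eval_tree_morph _ _ (fun u => (<< Some u >> : HM)) MNode (@mulH K) (MLeaf 0) 0);
  last first.
- by rewrite !size_map ?(enumT, size_enum_ord) ?(ssrfun.esym (enumT _)) ?size_enum_ord lx.
- by move=> a b; rewrite mulHUU.
congr (<< Some _ >>); rewrite /to_term.
rewrite (map_MLeaf (fun j => val (((x.2 : 'S_(m i))^-1)%g j))).
rewrite (@eval_tree_morph _ _ (shift_term (offset m i)) MNode MNode (MLeaf 0) (MLeaf 0)) //; last first.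
  by rewrite !size_map ?(enumT, size_enum_ord) ?(ssrfun.esym (enumT _)) ?size_enum_ord.
by congr eval_tree; rewrite -!map_comp.
Qed.

Lemma eval_S (x : K * tree * 'S_n) : leaves x.1.2 = n ->
  eval_tree 0 (@mulH K) x.1.2 [seq G (((x.2 : 'S_n)^-1)%g i) | i <- enum 'I_n] =
  J (subst_term fs (to_term x.1.2 x.2)).
Proof.
move=> lx; rewrite /to_term.
rewrite (map_MLeaf (fun j => val (((x.2 : 'S_n)^-1)%g j))).
rewrite (@eval_tree_morph _ _ (fun u => J (subst_term fs u)) MNode (@mulH K) (MLeaf 0) (0 : HM)); last first.
- by rewrite !size_map ?(enumT, size_enum_ord) ?(ssrfun.esym (enumT _)) ?size_enum_ord.
- by move=> a b; rewrite J_node.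
by congr eval_tree; rewrite -!map_comp; apply: eq_map => j /=; rewrite -J_fs.
Qed.

Lemma compA : iota_ (eval_free (mag_comp p q)) = mag_act +%R 0 *:%R (@mulH K) p G.
Proof.
rewrite /iota_ -(phi_eval_free (@mulH_L K) (@mulH_R K) (@mulH1x K) (@mulHx1 K)
                  (mag_comp p q) (g := gen K) (x := fun j => gen K j) (fun j => erefl)).
rewrite !mag_act_sum mag_compE big_flatten big_map.
apply: eq_big_seq => x xp.
have lx : leaves x.1.2 = n by apply/eqP; apply: (allP inp).
rewrite eval_S // /J scaler_sumr big_map; apply: eq_big_seq => y yS.
rewrite -scalerA; congr (_ *: (_ *: _)).
have hl := labels_comp xp yS.
rewrite (map_gen m).
transitivity (eval_tree 0 (@mulH K) (Defs.shape y.2)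
   (map (fun u => (<< Some u >> : HM)) (map MLeaf (labels y.2)))).
  congr (eval_tree _ _ _ (map _ (map _ _))).
  have E := perm_of_labelsE hl.
  by rewrite -[RHS]E.
rewrite -(@eval_tree_morph _ _ (fun u => (<< Some u >> : HM)) MNode (@mulH K) (MLeaf 0) 0).
- by rewrite eval_shape.
- by move=> a b; rewrite mulHUU.
- by rewrite size_map leaves_shape.
Qed.

End Comp.

Lemma comp_prim (K : fieldType) (n : nat) (m : 'I_n -> nat) (p : Mag K n)
  (q : forall i : 'I_n, Mag K (m i)) :
  PrimMag p -> (forall i, PrimMag (q i)) -> PrimMag (mag_comp p q).
Proof.
move=> hp hq.
have inp : in_Mag p := hp.1.
have inq : forall i, in_Mag (q i) by move=> i; exact: (hq i).1.
split.
  apply/allP => e; rewrite mag_compE => /flattenP[s /mapP[x xp ->] /mapP[y yS ->]] /=.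
  by rewrite leaves_shape (perm_size (labels_comp inp inq xp yS)) size_iota.
apply: bridge; rewrite compA //.
apply: (act_prim (@mulH_L K) (@mulH_R K) (@mulH1x K) (@mulHx1 K)
                 (@DeltaH_L K) (@DeltaH_1 K) (@DeltaH_M K)) => // i.
apply: (act_prim (@mulH_L K) (@mulH_R K) (@mulH1x K) (@mulHx1 K)
                 (@DeltaH_L K) (@DeltaH_1 K) (@DeltaH_M K)) => // j.
exact: gen_prim.
Qed.
Lemma id_prim (K : fieldType) : PrimMag (mag_id K).
Proof.
split; first by [].
apply: bridge.
have -> : iota_ (eval_free (mag_id K)) =
    mag_act +%R 0 *:%R (@mulH K) (mag_id K) (fun i => gen K i).
  by rewrite /iota_ (phi_eval_free (@mulH_L K) (@mulH_R K) (@mulH1x K) (@mulHx1 K)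
                       (mag_id K) (g := gen K) (fun i => erefl)).
rewrite mag_act_sum big_cons big_nil addr0 /= scale1r enum_ordSl /=.
exact: gen_prim.
Qed.



Theorem corollary1p4 (K : fieldType) :
  (* (i) Prim Mag is a suboperad of Mag *)
  (PrimMag (mag_id K) /\
   forall (n : nat) (m : 'I_n -> nat) (p : Mag K n) (q : forall i : 'I_n, Mag K (m i)),
     PrimMag p -> (forall i, PrimMag (q i)) -> PrimMag (mag_comp p q)) /\
  (* (ii) Prim H is an algebra over Prim Mag *)
  (forall (H : lmodType K) (mul : H -> H -> H) (one : H)
          (Delta : H -> seq (H * H)) (eps : H -> K),
     AsMag_bialgebra mul one Delta eps ->
     forall (n : nat) (p : Mag K n) (x : 'I_n -> H),
       PrimMag p -> (forall i, PrimH one Delta eps (x i)) ->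
       PrimH one Delta eps (mag_act +%R 0 *:%R mul p x)).
Proof.
split; first by split; [exact: id_prim | exact: comp_prim].
exact: part2.
Qed.
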